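(* Let $x \geq 1$ and $m \geq 1$ be integers. For $k \geq 1$, let $\mathcal{C}_{k,x}$ be the set of binary words of length $k$ containing no pattern from $\mathcal{T}_x = \{0\mathbf{1}^y0,\ 1\mathbf{0}^y1 : 1\le y\le x\}$ as a contiguous substring, listed in increasing lexicographic order (equivalently, increasing order as binary numbers with the leftmost bit most significant), and let $g(k,x,\mathbf{c}) \in \{0,1,\dots,N(k,x)-1\}$ be the position (index, starting from $0$) of $\mathbf{c}$ in this list, where $N(k,x)=|\mathcal{C}_{k,x}|$ for $k\ge 1$ and $N(k,x)\triangleq 2$ for all integers $k\le 1$. Let $\mathbf{c}' \in \mathcal{C}_{m+1,x}$, let $\mathbf{c}$ be the word formed by the $m$ rightmost bits of $\mathbf{c}'$, and (when $m-x\ge 1$) let $\mathbf{c}''$ be the word formed by the $m-x$ rightmost bits of $\mathbf{c}'$. Then: (1) if $\mathbf{c}'$ begins with $00$, then $g(m+1,x,\mathbf{c}') = g(m,x,\mathbf{c})$; (2) if $\mathbf{c}'$ begins with $0\mathbf{1}^{x+1}$, then $g(m+1,x,\mathbf{c}') = g(m,x,\mathbf{c}) - \tfrac12\left[N(m,x)-N(m-x,x)\right]$; (3) if $\mathbf{c}'$ begins with $\mathbf{1}^y\mathbf{0}^{x+1}$ for some $2 \le y \le x+1$, then $g(m+1,x,\mathbf{c}') = g(m,x,\mathbf{c}) + N(m-x,x)$; (4) if $\mathbf{c}'$ begins with $1\mathbf{0}^{x+1}$, then $g(m+1,x,\mathbf{c}') = g(m-x,x,\mathbf{c}'') + \tfrac12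 N(m+1,x)$; (5) if $\mathbf{c}'$ begins with $1\mathbf{1}^{x+1}$, then $g(m+1,x,\mathbf{c}') = g(m-x,x,\mathbf{c}'') + N(m,x)$. (In each case the words $\mathbf{c}$, $\mathbf{c}''$ belong to $\mathcal{C}_{m,x}$, $\mathcal{C}_{m-x,x}$ respectively.)
   Context: $\mathbf{0}^r$ (resp. $\mathbf{1}^r$) denotes a run of $r$ consecutive $0$'s (resp. $1$'s). ''Begins with'' a pattern means the leftmost bits of the word equal that pattern (so the case is vacuous if the pattern is longer than $m+1$). *)

(* Defs.v *)
(* Binary words are [seq bool] with [false] = 0, [true] = 1,
   leftmost element = leftmost (most significant) bit. *)
From mathcomp Require Import all_boot all_order all_algebra.
Set Implicit Arguments. Unset Strict Implicit. Unset Printing Implicit Defensive.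

Definition bin (k i : nat) : seq bool :=
  [seq odd (i %/ 2 ^ (k - 1 - j)) | j <- iota 0 k].

Definition pat0 (y : nat) : seq bool := false :: nseq y true ++ [:: false].
Definition pat1 (y : nat) : seq bool := true :: nseq y false ++ [:: true].

Definition avoidsT (x : nat) (w : seq bool) : bool :=
  all (fun y => ~~ infix (pat0 y) w && ~~ infix (pat1 y) w) (iota 1 x).

Definition Clist (k x : nat) : seq (seq bool) :=
  [seq w <- [seq bin k i | i <- iota 0 (2 ^ k)] | avoidsT x w].

Definition g (k x : nat) (c : seq bool) : nat := index c (Clist k x).

Definition N (k : int) (x : nat) : nat :=
  if (1 < k)%R then size (Clist `|k|%N x) else 2.

Definition rightmost (r : nat) (w : seq bool) : seq bool := drop (size w - r) w.

(* Main.v *)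
Require Import Defs.
From mathcomp Require Import all_boot all_order all_algebra.
From mathcomp Require Import zify ring lra.
Import GRing.Theory Num.Theory.

Section Av.
Variable x : nat.
Local Notation A := (avoidsT x).

Definition NP (u : seq bool) : bool :=
  all (fun y => ~~ prefix (pat0 y) u && ~~ prefix (pat1 y) u) (iota 1 x).

Lemma A_nil : A [::].
Proof. by apply/allP => y _ /=. Qed.

Lemma A_cons b w : A (b :: w) = A w && NP (b :: w).
Proof.
rewrite /avoidsT /NP -all_predI; apply: eq_all => y /=.
rewrite !negb_or.
by move: (infix (pat0 y) w) (infix (pat1 y) w) ((false == b) && _) ((true == b) && _) => [] [] [] [].
Qed.

Lemma A_suffix s t : A (s ++ t) -> A t.
Proof. by elim: s => // b s IH /=; rewrite A_cons => /andP[/IH]. Qed.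

Lemma prefix_negb p u : prefix (map negb p) (map negb u) = prefix p u.
Proof.
elim: u p => [|b u IH] [|a p] //=.
by rewrite IH; case: a; case: b.
Qed.

Lemma pat0N y : pat0 y = map negb (pat1 y).
Proof. by rewrite /pat0 /pat1 /= map_cat map_nseq. Qed.
Lemma pat1N y : pat1 y = map negb (pat0 y).
Proof. by rewrite /pat0 /pat1 /= map_cat map_nseq. Qed.

Lemma NP_negb u : NP (map negb u) = NP u.
Proof.
have h0 y : prefix (pat0 y) (map negb u) = prefix (pat1 y) u by rewrite pat0N prefix_negb.
have h1 y : prefix (pat1 y) (map negb u) = prefix (pat0 y) u by rewrite pat1N prefix_negb.
by apply: eq_all => y; rewrite h0 h1 andbC.
Qed.

Lemma A_negb w : A (map negb w) = A w.
Proof.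
elim: w => [|b w IH]; first by [].
by rewrite map_cons !A_cons IH -map_cons NP_negb.
Qed.

Lemma NP_bb b w : NP (b :: b :: w).
Proof.
apply/allP => y; rewrite mem_iota => /andP[y1 _].
by case: y y1 => // y _; case: b.
Qed.

Lemma E_bb b w : A (b :: b :: w) = A (b :: w).
Proof. by rewrite A_cons NP_bb andbT. Qed.

Lemma E_bbn b j w : A (b :: nseq j b ++ w) = A (b :: w).
Proof.
elim: j => // j IH.
by rewrite /= E_bb.
Qed.

Lemma pref_short b y k w : y <= k ->
  prefix (nseq y b ++ [:: ~~ b]) (nseq k.+1 b ++ w) = false.
Proof.
elim: y k => [|y IH] k.
  by move=> _ /=; case: b.
case: k => // k h /=; rewrite eqxx /=.
exact: IH.
Qed.

Lemma E_jump b w : A (~~ b :: nseq x.+1 b ++ w) = A (nseq x.+1 b ++ w).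
Proof.
rewrite A_cons; apply/andb_idr => _.
apply/allP => y; rewrite mem_iota => /andP[y1 yx].
have yx' : y <= x by rewrite -ltnS -(addn1 x) addnC.
case: b; rewrite /pat0 /pat1 /=.
  have := pref_short true y x w yx'; rewrite /= => ->; by rewrite ?andbF ?andbT.
have := pref_short false y x w yx'; rewrite /= => ->; by rewrite ?andbF ?andbT.
Qed.

Lemma E_empty b j w : 1 <= j <= x ->
  A (~~ b :: nseq j b ++ ~~ b :: w) = false.
Proof.
move=> /andP[j1 jx].
have jI : j \in iota 1 x by rewrite mem_iota j1 /= add1n ltnS.
rewrite A_cons.
suff : ~~ NP (~~ b :: nseq j b ++ ~~ b :: w) by move/negbTE->; rewrite andbF.
apply/allPn; exists j => //.
rewrite negb_and !negbK; apply/orP.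
case: b => /=; [left | right].
  by rewrite (_ : nseq j true ++ false :: w = (nseq j true ++ [:: false]) ++ w) ?prefix_prefix // -catA.
by rewrite (_ : nseq j false ++ true :: w = (nseq j false ++ [:: true]) ++ w) ?prefix_prefix // -catA.
Qed.

Lemma A_single b : A [:: b].
Proof.
apply/allP => y _; rewrite /pat0 /pat1 /=.
by case: b; case: y.
Qed.

End Av.


Fixpoint words k : seq (seq bool) :=
  if k is k'.+1 then map (cons false) (words k') ++ map (cons true) (words k')
  else [:: [::]].

Lemma bin_lo k i : i < 2 ^ k -> bin k.+1 i = false :: bin k i.
Proof.
move=> hi; rewrite /bin /= subn0 subn1 /= divn_small //; congr (_ :: _).
rewrite (iotaDl 1 0 k) -map_comp; apply/eq_in_map => j; rewrite mem_iota /= => _.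
by rewrite /= subnDA.
Qed.

Lemma bin_hi k i : i < 2 ^ k -> bin k.+1 (2 ^ k + i) = true :: bin k i.
Proof.
move=> hi; rewrite /bin /= subn0 subn1 /=.
rewrite divnDl // divnn expn_gt0 /= divn_small //; congr (_ :: _).
rewrite (iotaDl 1 0 k) -map_comp; apply/eq_in_map => j; rewrite mem_iota /= => hj.
rewrite /= subnDA.
have he : k - 1 - j <= k by rewrite (leq_trans (leq_subr _ _)) // leq_subr.
rewrite divnDl ?dvdn_exp2l // oddD -expnB // oddX.
have -> : (k - (k - 1 - j) == 0) = false.
  by apply/negbTE; rewrite subn_eq0 -ltnNge; lia.
by [].
Qed.

Lemma W_E k : [seq bin k i | i <- iota 0 (2 ^ k)] = words k.
Proof.
elim: k => [|k IH] //=.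
rewrite expnS mul2n -addnn iotaD map_cat add0n -IH -!map_comp.
congr (_ ++ _).
  by apply/eq_in_map => i; rewrite mem_iota /= => hi; rewrite bin_lo.
rewrite -{1}(addn0 (2 ^ k)) iotaDl -map_comp.
by apply/eq_in_map => i; rewrite mem_iota /= => hi; rewrite bin_hi.
Qed.

Lemma mem_cons_map (b b' : bool) w (W : seq (seq bool)) :
  (b :: w \in map (cons b') W) = (b == b') && (w \in W).
Proof.
apply/mapP/andP => [[v hv [-> ->]] | [/eqP -> hw]]; first by [].
by exists w.
Qed.

Lemma mem_words k w : (w \in words k) = (size w == k).
Proof.
elim: k w => [|k IH] [|b w] //=.
  by rewrite mem_cat; apply/negbTE; rewrite negb_or; apply/andP; split; apply/mapP => -[].
by rewrite mem_cat !mem_cons_map IH eqSS; case: b; rewrite ?orbF.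
Qed.

Definition L (f : pred (seq bool)) k := filter f (words k).
Definition G (f : pred (seq bool)) (w : seq bool) := index w (L f (size w)).
Definition S (f : pred (seq bool)) k := size (L f k).

Lemma L_S (f : pred (seq bool)) k : L f k.+1 =
  map (cons false) (L (fun w => f (false :: w)) k) ++
  map (cons true) (L (fun w => f (true :: w)) k).
Proof. by rewrite /L /= filter_cat !filter_map. Qed.

Lemma S_S (f : pred (seq bool)) k : S f k.+1 = S (fun w => f (false :: w)) k + S (fun w => f (true :: w)) k.
Proof. by rewrite /S L_S size_cat !size_map. Qed.

Lemma mem_L (f : pred (seq bool)) k w : (w \in L f k) = (size w == k) && f w.
Proof. by rewrite /L mem_filter mem_words andbC. Qed.

Lemma G_true (f : pred (seq bool)) w : G f (true :: w) =
  S (fun v => f (false :: v)) (size w) + G (fun v => f (true :: v)) w.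
Proof.
rewrite /G /= L_S index_cat.
have -> : (true :: w \in map (cons false) (L (fun w => f (false :: w)) (size w))) = false.
  by apply/mapP => -[].
by rewrite size_map index_map //; move=> a b [].
Qed.

Lemma G_false (f : pred (seq bool)) w : f (false :: w) ->
  G f (false :: w) = G (fun v => f (false :: v)) w.
Proof.
move=> fw; rewrite /G /= L_S index_cat.
have -> : (false :: w \in map (cons false) (L (fun w => f (false :: w)) (size w))).
  by apply/mapP; exists w => //; rewrite mem_L eqxx.
by rewrite index_map //; move=> a b [].
Qed.

Lemma eqG (f f' : pred (seq bool)) w : f =1 f' -> G f w = G f' w.
Proof. by move=> h; rewrite /G /L (eq_filter h). Qed.
Lemma eqS (f f' : pred (seq bool)) k : f =1 f' -> S f k = S f' k.
Proof. by move=> h; rewrite /S /L (eq_filter h). Qed.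
Lemma S0 (f : pred (seq bool)) k : f =1 (fun _ => false) -> S f k = 0.
Proof. by move=> h; rewrite /S /L (eq_filter h) filter_pred0. Qed.


Section Main.
Variable x : nat.
Hypothesis hx : 1 <= x.
Local Notation A := (avoidsT x).

Definition s0 k := S (fun v => A (false :: v)) k.
Definition s1 k := S (fun v => A (true :: v)) k.
Definition a k := S (fun v => A (true :: false :: v)) k.

Lemma Sym k p : S (fun v => A (p ++ v)) k = S (fun v => A (map negb p ++ v)) k.
Proof.
elim: k p => [|k IH] p.
  by rewrite /S /L /= !cats0 A_negb.
rewrite !S_S.
rewrite (@eqS _ (fun v => A (rcons p false ++ v))); last by move=> v; rewrite cat_rcons.
rewrite (@eqS (fun w => A (p ++ true :: w)) (fun v => A (rcons p true ++ v))); last by move=> v; rewrite cat_rcons.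
rewrite (@eqS (fun w => A (map negb p ++ false :: w)) (fun v => A (rcons (map negb p) false ++ v))); last by move=> v; rewrite cat_rcons.
rewrite (@eqS (fun w => A (map negb p ++ true :: w)) (fun v => A (rcons (map negb p) true ++ v))); last by move=> v; rewrite cat_rcons.
by rewrite (IH (rcons p false)) (IH (rcons p true)) !map_rcons /= addnC.
Qed.

Lemma s01 k : s0 k = s1 k.
Proof. exact: (Sym k [:: false]). Qed.

Lemma F1 k : s1 k.+1 = a k + s1 k.
Proof.
rewrite /s1 S_S; congr (_ + _).
by apply: eqS => v; rewrite E_bb.
Qed.

Lemma nseq_shift (b : bool) j w : nseq j b ++ b :: w = b :: nseq j b ++ w.
Proof. by elim: j => //= j ->. Qed.

Lemma F2walk i j k : j + i = x.+1 -> 0 < j ->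
  S (fun v => A (true :: nseq j false ++ v)) (k + i) = s0 k.
Proof.
elim: i j => [|i IH] j.
  rewrite addn0 => -> _; rewrite addn0; apply: eqS => v.
  have := E_jump x false v; rewrite /= => ->.
  exact: (E_bbn x false x v).
move=> hj j0; rewrite addnS S_S.
rewrite (@S0 (fun w => A (true :: nseq j false ++ true :: w))); last first.
  move=> w; have := E_empty x false j w; rewrite /= => -> //.
  by rewrite j0 /=; lia.
rewrite addn0 -(IH j.+1) ?addSnnS //.
by apply: eqS => v; rewrite nseq_shift.
Qed.

Lemma F2 k : a (k + x) = s0 k.
Proof. exact: (F2walk x 1 k (add1n x) isT). Qed.

Lemma W1 j d : G (fun v => A (true :: v)) (nseq j true ++ d) + s1 (size d) =
  s1 (j + size d) + G (fun v => A (true :: v)) d.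
Proof.
elim: j => [|j IH]; first by rewrite add0n addnC.
have -> : nseq j.+1 true ++ d = true :: (nseq j true ++ d) by [].
rewrite G_true size_cat size_nseq.
rewrite (@eqG (fun v => A (true :: true :: v)) (fun v => A (true :: v))); last by move=> v; rewrite E_bb.
have := F1 (j + size d); rewrite -/(a _) addSn.
lia.
Qed.

Lemma W2 i j d : i + j = x.+1 -> 0 < j ->
  G (fun v => A (false :: nseq j true ++ v)) (nseq i true ++ d) =
  G (fun v => A (false :: nseq x.+1 true ++ v)) d.
Proof.
elim: i j => [|i IH] j.
  by rewrite add0n => -> _.
move=> hj j0 /=; rewrite G_true.
rewrite (@S0 (fun w => A (false :: nseq j true ++ false :: w))); last first.
  move=> w; have := E_empty x true j w; rewrite /= => -> //.
  by rewrite j0 /=; lia.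
rewrite add0n -(IH j.+1) ?addnS //.
by apply: eqG => v; rewrite nseq_shift.
Qed.

Lemma W0 i p d : A (p ++ nseq i false ++ d) ->
  G (fun v => A (p ++ v)) (nseq i false ++ d) =
  G (fun v => A (p ++ nseq i false ++ v)) d.
Proof.
elim: i p => [|i IH] p //= h.
rewrite G_false //.
rewrite (@eqG _ (fun v => A (rcons p false ++ v))); last by move=> v; rewrite cat_rcons.
rewrite IH; last by rewrite cat_rcons.
by apply: eqG => v; rewrite cat_rcons.
Qed.

Lemma memC k w : (w \in Clist k x) = (size w == k) && A w.
Proof. by rewrite /Clist W_E mem_filter mem_words andbC. Qed.

Lemma g_G k c : size c = k -> g k x c = G A c.
Proof. by move=> <-; rewrite /g /Clist W_E. Qed.

Lemma N_nat k : N (Posz k.+1) x = (s1 k).*2.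
Proof.
rewrite /N; case: k => [|k].
  by rewrite /s1 /S /L /= A_single.
rewrite ltz_nat /= /Clist W_E.
rewrite -/(L A k.+2) -/(S A k.+2) S_S -/(s0 _) -/(s1 _) s01.
by rewrite addnn.
Qed.

End Main.


Theorem lemma1 (x m : nat) (hx : (1 <= x)%N) (hm : (1 <= m)%N) (c' : seq bool) :
  c' \in Clist m.+1 x ->
  let c := rightmost m c' in
  let c'' := rightmost (m - x) c' in
  c \in Clist m x /\
  (prefix [:: false; false] c' ->
     g m.+1 x c' = g m x c) /\
  (prefix (false :: nseq x.+1 true) c' ->
     (((g m.+1 x c')%:R : rat) =
       (g m x c)%:R - ((N m x)%:R - (N (m%:Z - x%:Z) x)%:R) / 2%:R)%R) /\
  ((exists y : nat, [/\ (2 <= y)%N, (y <= x.+1)%N &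
                        prefix (nseq y true ++ nseq x.+1 false) c']) ->
     g m.+1 x c' = (g m x c + N (m%:Z - x%:Z)%R x)%N) /\
  (prefix (true :: nseq x.+1 false) c' ->
     c'' \in Clist (m - x) x /\
     (((g m.+1 x c')%:R : rat) = (g (m - x)%N x c'')%:R + (N m.+1 x)%:R / 2%:R)%R) /\
  (prefix (true :: nseq x.+1 true) c' ->
     c'' \in Clist (m - x) x /\
     g m.+1 x c' = (g (m - x) x c'' + N m x)%N).
Proof.
intros hC c c''.
move: hC; rewrite (memC x m.+1) => /andP[/eqP hsz hA].
rewrite /c'' /c /rightmost; clear c c''.
rewrite hsz subSnn.
case: c' hsz hA => [|b c0] // [hsz] hA.
have -> : drop 1 (b :: c0) = c0 by rewrite /= drop0.
split.
  by rewrite memC hsz eqxx (A_suffix x [:: b] c0 hA).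
split.
  move/prefixP => [d [hb hc]]; subst b c0.
  have hA' := A_suffix x [:: false] _ hA.
  subst m.
  rewrite !(g_G x) //.
  rewrite [RHS]G_false // G_false // G_false //.
  by apply: eqG => v /=; rewrite E_bb.
split.
  move/prefixP => [d hd].
  have {hd} [hb hc] : b = false /\ c0 = nseq x.+1 true ++ d by case: hd.
  subst b c0.
  rewrite size_cat size_nseq in hsz; subst m.
  set n := size d.
  have e1 : g (x.+1 + n).+1 x (false :: nseq x.+1 true ++ d) = s0 x (x + n) + G (fun v => avoidsT x (true :: v)) d.
    rewrite (g_G x); last by rewrite /= size_cat size_nseq.
    rewrite G_false //.
    rewrite (_ : nseq x.+1 true ++ d = true :: (nseq x true ++ d)) // G_true.
    rewrite size_cat size_nseq -/n.
    congr (_ + _); first by apply: eqS => v /=; rewrite E_bb.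
    rewrite (W2 x hx x 1 d (addn1 x) isT).
    apply: eqG => v.
    have := E_jump x true v; rewrite /= => ->.
    exact: (E_bbn x true x v).
  have e2 : g (x.+1 + n) x (nseq x.+1 true ++ d) = s0 x (x + n) + G (fun v => avoidsT x (true :: v)) (nseq x true ++ d).
    rewrite (g_G x); last by rewrite /= size_cat size_nseq.
    rewrite (_ : nseq x.+1 true ++ d = true :: (nseq x true ++ d)) // G_true.
    by rewrite size_cat size_nseq -/n.
  have e3 := W1 x hx x d; rewrite -/n in e3.
  have hN1 : N (x.+1 + n)%N x = (s1 x (x + n)).*2 by rewrite addSn N_nat.
  have hN2 : N (Posz (x.+1 + n) - Posz x)%R x = (s1 x n).*2.
    by rewrite (_ : (Posz (x.+1 + n) - Posz x)%R = Posz n.+1) ?N_nat //; lia.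
  rewrite hN1 hN2 e1 e2 !s01.
  move: e3; rewrite -!addnn.
  move/(congr1 (fun k => k%:R : rat)); rewrite !natrD => e3.
  lra.
split.
  move=> [y [y2 yx /prefixP [d hd]]].
  case: y y2 yx hd => [|[|y]] // _ yx hd.
  have {hd} [hb hc] : b = true /\ c0 = nseq y.+1 true ++ (nseq x.+1 false ++ d).
    by case: hd => -> ->; split; rewrite // -catA.
  subst b c0.
  set D := nseq x.+1 false ++ d.
  have hK : size D = x.+1 + size d by rewrite /D size_cat size_nseq.
  set n := size d in hK.
  set K := size D in hK.
  rewrite size_cat size_nseq -/K in hsz; subst m.
  have e1 : g (y.+1 + K).+1 x (true :: nseq y.+1 true ++ D) =
      s0 x (y.+1 + K) + G (fun v => avoidsT x (true :: v)) (nseq y.+1 true ++ D).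
    rewrite (g_G x); last by rewrite /= size_cat size_nseq.
    by rewrite G_true size_cat size_nseq.
  have e2 : g (y.+1 + K) x (nseq y.+1 true ++ D) =
      s0 x (y + K) + G (fun v => avoidsT x (true :: v)) (nseq y true ++ D).
    rewrite (g_G x); last by rewrite /= size_cat size_nseq.
    rewrite (_ : nseq y.+1 true ++ D = true :: (nseq y true ++ D)) // G_true.
    by rewrite size_cat size_nseq.
  have w1 := W1 x hx y.+1 D.
  have w2 := W1 x hx y D.
  have f1 := F1 x (y + K).
  have f2 := F2 x hx (y.+1 + n).
  rewrite (_ : y.+1 + n + x = y + K) in f2; last by rewrite hK; lia.
  have hN : N (Posz (y.+1 + K) - Posz x)%R x = (s1 x (y.+1 + n)).*2.
    by rewrite (_ : (Posz (y.+1 + K) - Posz x)%R = Posz (y.+1 + n).+1) ?N_nat //; rewrite hK; lia.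
  rewrite hN e1 e2.
  rewrite !s01 in e1 e2 f2 *.
  rewrite -/K in w1 w2.
  rewrite !addSn in w1 e1 f2 *.
  rewrite -!addnn.
  lia.
split.
  move/prefixP => [d hd].
  have {hd} [hb hc] : b = true /\ c0 = nseq x.+1 false ++ d by case: hd.
  subst b c0.
  rewrite size_cat size_nseq in hsz; subst m.
  set n := size d.
  rewrite (_ : x.+1 + n - x = n.+1); last by lia.
  rewrite (_ : (x.+1 + n).+1 - n.+1 = x.+1); last by lia.
  have hdrop : drop x.+1 (true :: nseq x.+1 false ++ d) = false :: d.
    by rewrite /= -nseq_shift drop_size_cat // size_nseq.
  rewrite hdrop.
  have hA2 : avoidsT x ((true :: nseq x false) ++ false :: d).
    by rewrite /= nseq_shift.
  have hA3 := A_suffix x _ _ hA2.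
  split; first by rewrite memC hA3 eqxx.
  have e1 : g (x.+1 + n).+1 x (true :: nseq x.+1 false ++ d) =
      s0 x (x.+1 + n) + G (fun v => avoidsT x (false :: v)) d.
    rewrite (g_G x); last by rewrite /= size_cat size_nseq.
    rewrite G_true size_cat size_nseq -/n; congr (_ + _).
    rewrite (@eqG (fun v => avoidsT x (true :: v)) (fun v => avoidsT x ([:: true] ++ v))) //.
    rewrite W0 //.
    apply: eqG => v.
    have := E_jump x false v; rewrite /= => ->.
    exact: (E_bbn x false x v).
  have e2 : g n.+1 x (false :: d) = G (fun v => avoidsT x (false :: v)) d.
    by rewrite (g_G x) // G_false.
  rewrite e1 e2 N_nat s01 -addnn natrD.
  lra.
move/prefixP => [d hd].
have {hd} [hb hc] : b = true /\ c0 = nseq x.+1 true ++ d by case: hd.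
subst b c0.
rewrite size_cat size_nseq in hsz; subst m.
set n := size d.
rewrite (_ : x.+1 + n - x = n.+1); last by lia.
rewrite (_ : (x.+1 + n).+1 - n.+1 = x.+1); last by lia.
have hdrop : drop x.+1 (true :: nseq x.+1 true ++ d) = true :: d.
  by rewrite /= -nseq_shift drop_size_cat // size_nseq.
rewrite hdrop.
have hA2 : avoidsT x ((true :: nseq x true) ++ true :: d).
  by rewrite /= nseq_shift.
have hA3 := A_suffix x _ _ hA2.
split; first by rewrite memC hA3 eqxx.
have e1 : g (x.+1 + n).+1 x (true :: nseq x.+1 true ++ d) =
    s0 x (x.+1 + n) + G (fun v => avoidsT x (true :: v)) (nseq x.+1 true ++ d).
  rewrite (g_G x); last by rewrite /= size_cat size_nseq.
  by rewrite G_true size_cat size_nseq.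
have e2 : g n.+1 x (true :: d) = s0 x n + G (fun v => avoidsT x (true :: v)) d.
  by rewrite (g_G x) // G_true.
have w1 := W1 x hx x.+1 d.
have f1 := F1 x (x + n).
have f2 := F2 x hx n.
rewrite addnC in f2.
have hN : N (Posz (x.+1 + n)) x = (s1 x (x + n)).*2 by rewrite addSn N_nat.
rewrite hN e1 e2.
rewrite -/n in w1.
rewrite !s01 in f2 *.
rewrite !addSn in w1 *.
rewrite -!addnn.
lia.
Qed.
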